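(* Let $\mathcal{A}'$ be an alphabet with $d\ge2$ letters and $\pi'$ an irreducible permutation on $\mathcal{A}'$, with $A$ the first letter of the top row and $E$ the first letter of the bottom row. Let $B\notin\mathcal{A}'$, $\mathcal{A}=\mathcal{A}'\cup\{B\}$, and let $C,D\in\mathcal{A}'$ with $(C,D)\ne(A,E)$ ($C=D$ allowed). Let $\pi$ be the permutation on $\mathcal{A}$ obtained from $\pi'$ by inserting $B$ immediately before $C$ in the top row and immediately before $D$ in the bottom row. Then $\pi$ is irreducible.
   Context: A permutation on an alphabet $\mathcal{A}$ is a pair $(\pi_0,\pi_1)$ of bijections $\mathcal{A}\to\{1,\dots,\#\mathcal{A}\}$, viewed as a top row and a bottom row listing the letters in order; it is irreducible if there is no $1\le k<\#\mathcal{A}$ such that the sets of the first $k$ letters of the top row and of the bottom row coincide. *)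

(* Defs.v *)
From mathcomp Require Import all_boot.
Set Implicit Arguments. Unset Strict Implicit. Unset Printing Implicit Defensive.

(* A permutation on an alphabet, viewed as its top row [top] and bottom row
   [bot]: two duplicate-free lists of the same letters (the alphabet is the
   set of letters of [top]).  The position of a letter in a row is its
   index (shifted by 1 w.r.t. the paper's {1,...,#A}). *)
Definition is_perm (T : eqType) (top bot : seq T) : Prop :=
  [/\ uniq top, uniq bot & perm_eq top bot].

Definition irreducible (T : eqType) (top bot : seq T) : Prop :=
  forall k : nat, 1 <= k -> k < size top -> ~ (take k top =i take k bot).

Definition insert_before (T : eqType) (b c : T) (s : seq T) : seq T :=
  take (index c s) s ++ b :: drop (index c s) s.

(* Main.v *)
Require Import Defs.
From mathcomp Require Import all_boot.

Lemma take_ins_le (T : eqType) (b c : T) s k :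
  k <= index c s -> take k (insert_before b c s) = take k s.
Proof.
move=> hk; rewrite /insert_before take_cat size_take.
have hi := index_size c s.
have -> : (if index c s < size s then index c s else size s) = index c s.
  by case: ltnP => // h; apply/eqP; rewrite eqn_leq h hi.
case: ltnP => h; first by rewrite take_takel // ltnW.
have ei : k = index c s by apply/eqP; rewrite eqn_leq hk h.
by rewrite -ei subnn take0 cats0.
Qed.

Lemma take_ins_gt (T : eqType) (b c : T) s k :
  index c s < k -> take k (insert_before b c s) =i b :: take k.-1 s.
Proof.
move=> hk; rewrite /insert_before take_cat size_take.
have hi := index_size c s.
have -> : (if index c s < size s then index c s else size s) = index c s.
  by case: ltnP => // h; apply/eqP; rewrite eqn_leq h hi.
rewrite ltnNge (ltnW hk) /=.
case: k hk => // k hk.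
have -> : k.+1 - index c s = (k - index c s).+1 by rewrite subSn.
have hk2 : index c s <= k by [].
rewrite /= -[in take k s](subnKC hk2) takeD => x.
by rewrite !inE !mem_cat inE orbCA.
Qed.

Lemma ins_perm (T : eqType) (b c : T) s : perm_eq (insert_before b c s) (b :: s).
Proof.
rewrite /insert_before -[in b :: s](cat_take_drop (index c s) s).
by rewrite -cat1s perm_catCA.
Qed.

Lemma index_head0 (T : eqType) (c a : T) s :
  ohead s = Some a -> index c s = 0 -> c = a.
Proof. by case: s => //= y s [->]; case: eqP. Qed.

Theorem lemma5p4 (T : eqType) (top bot : seq T) (A E B C D : T) :
  is_perm top bot ->
  2 <= size top ->
  irreducible top bot ->
  ohead top = Some A ->
  ohead bot = Some E ->
  B \notin top ->
  C \in top -> D \in top ->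
  (C, D) <> (A, E) ->
  is_perm (insert_before B C top) (insert_before B D bot) /\
  irreducible (insert_before B C top) (insert_before B D bot).
Proof.
move=> [ut ub pe] hs hirr hA hE hB hC hD hne.
have hBb : B \notin bot by rewrite -(perm_mem pe).
have p1 := @ins_perm T B C top; have p2 := @ins_perm T B D bot.
split.
  split.
  - by rewrite (perm_uniq p1) /= hB ut.
  - by rewrite (perm_uniq p2) /= hBb ub.
  - by rewrite (perm_trans p1) // perm_sym (perm_trans p2) // perm_sym perm_cons.
move=> k k1; rewrite (perm_size p1) /= ltnS => kn heq.
have nB : forall m, B \notin take m bot.
  by move=> m; apply/negP => /mem_take; rewrite (negbTE hBb).
have nBt : forall m, B \notin take m top.
  by move=> m; apply/negP => /mem_take; rewrite (negbTE hB).
case: (leqP k (index C top)) => hi; case: (leqP k (index D bot)) => hj.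
- apply: (hirr k k1); last by move=> x; rewrite -(@take_ins_le _ B _ _ _ hi) (heq x) (@take_ins_le _ B _ _ _ hj).
  by apply: (leq_ltn_trans hi); rewrite index_mem.
- have := heq B; rewrite (@take_ins_le _ B _ _ _ hi) (@take_ins_gt _ B _ _ _ hj) inE eqxx /=.
  by rewrite (negbTE (nBt _)).
- have := heq B; rewrite (@take_ins_le _ B _ _ _ hj) (@take_ins_gt _ B _ _ _ hi) inE eqxx /=.
  by rewrite (negbTE (nB _)).
- case: k k1 kn heq hi hj => // [[|k]] _ kn heq hi hj.
    apply: hne.
    have i0 : index C top = 0 by move: hi; rewrite ltnS leqn0 => /eqP.
    have j0 : index D bot = 0 by move: hj; rewrite ltnS leqn0 => /eqP.
    by rewrite (@index_head0 _ C A top hA i0) (@index_head0 _ D E bot hE j0).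
  apply: (hirr k.+1) => //.
  move=> x; have := heq x; rewrite (@take_ins_gt _ B _ _ _ hi) (@take_ins_gt _ B _ _ _ hj) /= !inE.
  case: (eqVneq x B) => [->|_] //=.
  by rewrite (negbTE (nBt _)) (negbTE (nB _)).
Qed.
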